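(* Let $\mathcal C\subseteq(\mathbb C^2)^{\otimes n}$ be the codespace of a stabilizer code and let $\pi\in S_n$ be a qubit permutation with permutation operator $U_\pi$ such that $U_\pi\mathcal C=\mathcal C$, the restriction $U_\pi|_{\mathcal C}$ is not a scalar multiple of the identity, and $(U_\pi|_{\mathcal C})^2$ is a scalar multiple of the identity on $\mathcal C$. Then the order of $\pi$ in $S_n$ is even.
   Context: $U_\pi$ denotes the unitary on $(\mathbb C^2)^{\otimes n}$ that permutes tensor factors according to $\pi$; the order (period) of $\pi$ is the least $p\ge1$ with $\pi^p=\mathrm{id}$. *)

(* Defs.v *)
(* Qubit Hilbert space (C^2)^{(x)n} modelled as algC^(2^n),
   computational basis index a : 'I_(2^n), bit j of a = j-th qubit value. *)
From HB Require Import structures.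
From mathcomp Require Import all_boot all_order all_algebra all_fingroup all_field.
Set Implicit Arguments. Unset Strict Implicit. Unset Printing Implicit Defensive.
Import Order.TTheory GRing.Theory Num.Theory.
Local Open Scope ring_scope.

Definition qbit (n : nat) (a : 'I_(2 ^ n)) (j : 'I_n) : bool := odd (a %/ 2 ^ j).

(* Pauli operator  i^k X^x Z^z  with X^x = prod_j X_j^{x_j}, Z^z = prod_j Z_j^{z_j} *)
Arguments qbit : clear implicits.
Definition pauli_mx (n k : nat) (x z : {ffun 'I_n -> bool}) : 'M[algC]_(2 ^ n) :=
  \matrix_(a, b)
    ('i ^+ k * (-1) ^+ (\sum_(j < n) (z j && qbit n b j : nat))
      * ([forall j, qbit n a j == xorb (qbit n b j) (x j)] : nat)%:R).

Arguments pauli_mx : clear implicits.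

Definition is_pauli (n : nat) (M : 'M[algC]_(2 ^ n)) : Prop :=
  exists k x z, M = pauli_mx n k x z :> 'M[algC]_(2 ^ n).

(* stabilizer group: abelian subgroup of the n-qubit Pauli group not containing -I
   (closure under products and containing I makes a set of Paulis, which is finite,
   a subgroup) *)
Definition stabilizer_group (n : nat) (S : 'M[algC]_(2 ^ n) -> Prop) : Prop :=
  [/\ forall M, S M -> is_pauli M,
      S 1%:M,
      forall A B, S A -> S B -> S (A *m B),
      forall A B, S A -> S B -> A *m B = B *m A
    & ~ S (- 1%:M)].
Arguments stabilizer_group : clear implicits.

Definition codespace (n : nat) (S : 'M[algC]_(2 ^ n) -> Prop) (v : 'cV[algC]_(2 ^ n)) : Prop :=
  forall M, S M -> M *m v = v.

Definition perm_op (n : nat) (pi : 'S_n) : 'M[algC]_(2 ^ n) :=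
  \matrix_(a, b) ([forall j, qbit n a (pi j) == qbit n b j] : nat)%:R.
Arguments codespace : clear implicits.
Arguments perm_op : clear implicits.

(* Main.v *)
Require Import Defs.
From mathcomp Require Import all_boot all_order all_algebra all_fingroup all_field zify.
Import GRing.Theory.

Lemma modS2 a d : (0 < d)%N -> (a %% (d * 2) = a %% d + odd (a %/ d) * d)%N.
Proof.
move=> d0. rewrite -modn2.
rewrite {1}(divn_eq a d) {1}(divn_eq (a %/ d) 2).
have hr := ltn_mod a d. rewrite d0 in hr.
have hq := ltn_mod (a %/ d) 2.
move: (a %/ d %/ 2) (a %/ d %% 2) (a %% d) hr hq => x y r hr hq.
rewrite mulnDl -mulnA (mulnC 2) -addnA modnMDl modn_small //; first by rewrite addnC.
nia.
Qed.

Lemma mod_sum a n : (a %% 2 ^ n = \sum_(j < n) odd (a %/ 2 ^ j) * 2 ^ j)%N.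
Proof.
elim: n => [|n IH]; first by rewrite big_ord0 expn0 modn1.
by rewrite big_ord_recr /= -IH expnSr modS2 // expn_gt0.
Qed.

Lemma bits_inj n (a b : 'I_(2 ^ n)) : (forall j, qbit n a j = qbit n b j) -> a = b.
Proof.
move=> h; apply: val_inj => /=.
rewrite -(modn_small (ltn_ord a)) -(modn_small (ltn_ord b)) !mod_sum.
by apply: eq_bigr => j _; have := h j; rewrite /qbit => ->.
Qed.

Lemma bits_ex n (f : 'I_n -> bool) : exists a : 'I_(2 ^ n), forall j, qbit n a j = f j.
Proof.
pose g (a : 'I_(2 ^ n)) := [ffun j => qbit n a j].
have gi : injective g.
  move=> a b /ffunP h; apply: bits_inj => j; by have := h j; rewrite !ffunE.
have := inj_card_onto gi; rewrite card_ffun card_bool !card_ord leqnn => /(_ isT (finfun f)).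
case/codomP => a ha; exists a => j.
by have := congr1 (fun F : {ffun 'I_n -> bool} => F j) ha; rewrite !ffunE => ->.
Qed.

Local Open Scope ring_scope.

Definition Uk n (s : 'S_n) : 'M[algC]_(2 ^ n) :=
  \matrix_(a, b) ([forall j, qbit n a (s j) == qbit n b j] : nat)%:R.

Lemma Upow n (pi : 'S_n) k : (perm_op n pi) ^+ k = Uk n (pi ^+ k)%g.
Proof.
elim: k => [|k IH].
  apply/matrixP => a b; rewrite expr0 expg0 !mxE.
  congr (_%:R); congr nat_of_bool; apply/esym.
  apply/forallP/eqP => [h|->]; last by move=> j; rewrite perm1.
  by apply: bits_inj => j; have := h j; rewrite perm1 => /eqP.
apply/matrixP => a b; rewrite exprS IH !mxE.
have [c hc] := @bits_ex n (fun j => qbit n a (pi j)).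
rewrite (bigD1 c) //= big1 ?addr0.
  rewrite !mxE.
  have -> : [forall j, qbit n a (pi j) == qbit n c j] = true.
    by apply/forallP => j; rewrite hc.
  rewrite mul1r expgSr; congr (_%:R); congr nat_of_bool.
  apply: eq_forallb => j; by rewrite permM hc.
move=> d ne; rewrite !mxE.
case: (boolP [forall j, _]) => [/forallP h|]; last by rewrite mul0r.
have dc : d = c by apply: bits_inj => j; rewrite hc; have := h j; move/eqP.
by rewrite dc eqxx in ne.
Qed.

Theorem mainTheorem7 (n : nat) (S : 'M[algC]_(2 ^ n) -> Prop) (pi : 'S_n) :
  stabilizer_group n S ->
  (forall v, codespace n S v -> codespace n S (perm_op n pi *m v)) ->
  (forall w, codespace n S w -> exists v, codespace n S v /\ perm_op n pi *m v = w) ->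
  ~ (exists c : algC, forall v, codespace n S v -> perm_op n pi *m v = c *: v) ->
  (exists c : algC, forall v, codespace n S v ->
     perm_op n pi *m (perm_op n pi *m v) = c *: v) ->
  ~~ odd #[pi]%g.
Proof.
move=> _ _ _ Hns [c Hc]; apply/negP => Hodd; apply: Hns.
set U := perm_op n pi.
have U1 : Uk n 1 = 1 by rewrite -(expg0 pi) -Upow expr0.
have Up : U ^+ #[pi]%g = 1%:M by rewrite /U Upow expg_order U1.
have Hp : #[pi]%g = (2 * #[pi]%g./2).+1.
  by rewrite -{1}(odd_double_half #[pi]%g) Hodd mul2n.
set m := #[pi]%g./2 in Hp.
exists (c ^+ m)^-1 => v Cv.
have Hm : forall k, (U ^+ 2) ^+ k *m v = c ^+ k *: v.
  elim=> [|k IH]; first by rewrite !expr0 mul1mx scale1r.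
  by rewrite exprSr -mulmxA expr2 -mulmxA Hc // -scalemxAr IH scalerA exprSr mulrC.
have : v = c ^+ m *: (U *m v).
  by rewrite -{1}(mul1mx v) -Up Hp exprS exprM -mulmxA Hm -scalemxAr.
have [->|nz] := eqVneq (c ^+ m) 0.
  by rewrite scale0r => ->; rewrite mulmx0 scaler0.
move=> {2}->; by rewrite scalerA mulVf // scale1r.
Qed.
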